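(* Let $O$ be a validated totally-ordered object, $S$ a sequence of operations, $i\neq j$ processes, and $op_i, op_j\notin S$ operations issued by $i$ and $j$ respectively, such that $\mathrm{valid}(S,op_i,i)=\mathit{True}$, $\mathrm{valid}(S,op_j,j)=\mathit{True}$, $\mathrm{valid}(S\|op_j,op_i,i)=\mathit{False}$ and $\mathrm{valid}(S\|op_i,op_j,j)=\mathit{False}$. Then, in an asynchronous system in which at most one of $i,j$ crashes, the following algorithm solves consensus between $i$ and $j$ (every correct one of them decides, both decide the same value, and the decided value was proposed by $i$ or $j$). The object $O$ is initialized with state $S$; $c_i,c_j$ are reliable atomic SWMR registers, written only by $i$ resp. $j$, initially $\bot$. Process $i$, proposing $v_i$: writes $v_i$ to $c_i$; calls $r\leftarrow O.\mathrm{apply}(op_i,i)$; if $r=(\mathit{NACK},-)$ it reads $v_j$ from $c_j$ and decides it, otherwise it decides $v_i$. Process $j$ executes the symmetric code with $v_j$, $c_j$, $op_j$ and reading $c_i$.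
   Context: Validated object: given a predicate $\mathrm{valid}(\cdot, op, i)$ and function $\mathrm{execute}(\cdot, op, i)$, first argument a strictly partially ordered set of operations (a sequence when totally ordered), $op$ an operation, $i$ its issuer. Clients use $\mathrm{apply}(op,i)$, returning $(\mathit{ACK}, r)$ if $op$ is found valid and executed with result $r$, and $(\mathit{NACK},-)$ otherwise. For a sequence $S$, $S\|op$ denotes $S$ followed by $op$. The history of a run contains only operations for which $\mathrm{apply}$ returns $\mathit{ACK}$; $C(R)$ is the set of complete such operations; $op\rightarrow op'$ means the response of $op$ precedes the invocation of $op'$. Validated totally-ordered object: in every run $R$ there is a total order $\ll$ on $C(R)$ such that (1) $op\rightarrow op'$ implies $op\ll op'$; (2) for every $op\in C(R)$ issued by $i$, with $P(op)=\{op'\in C(R): op'\ll op\}$, $\mathrm{valid}(\langle P(op),\ll\rangle,op,i)=\mathit{True}$ and $op$ returns $\mathrm{execute}(\langle P(op),\ll\rangle,op,i)$. The object $O$ is assumed reliable (it never fails). *)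

(* Defs.v *)
From mathcomp Require Import all_boot.
Set Implicit Arguments. Unset Strict Implicit. Unset Printing Implicit Defensive.

Section Model.
Variables (Pid Op : eqType) (V Res : Type).

(* EWrite p v      : p writes v into its own SWMR register c_p
   EInv p o        : p invokes O.apply(o, p)
   EResp p b r     : the object responds to p's pending apply:
                     (ACK, r) if b = true, (NACK, -) if b = false
   ERead p x       : p reads the register of the other process, obtaining x
                     (None = bottom)
   EDecide p x     : p decides x *)
Inductive event :=
| EWrite of Pid & V
| EInv of Pid & Op
| EResp of Pid & bool & Res
| ERead of Pid & option V
| EDecide of Pid & option V.

Definition proc (e : event) : Pid :=
  match e with
  | EWrite p _ | EInv p _ | EResp p _ _ | ERead p _ | EDecide p _ => p
  end.

(* A run: at each (discrete, global) time at most one event happens.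
   Arbitrary interleavings model asynchrony. *)
Definition run := nat -> option event.

Definition events_before (R : run) (t : nat) : seq event := pmap R (iota 0 t).

Definition local (R : run) (p : Pid) (t : nat) : seq event :=
  [seq e <- events_before R t | proc e == p].

Definition reg (R : run) (q : Pid) (t : nat) : option V :=
  foldl (fun acc e => match e with
                      | EWrite p v => if p == q then Some v else acc
                      | _ => acc end) None (events_before R t).

(* The code of a process p proposing v and applying operation o:
   write v to c_p; r <- O.apply(o,p); if r = NACK then read c_q and decide
   the value read, else decide v.  [code_step p v o h cq e] says that e is
   the next step of p after local history h, when c_q currently holds cq. *)
Definition code_step (p : Pid) (v : V) (o : Op) (h : seq event)
  (cq : option V) (e : event) : Prop :=
  match h with
  | [::] => e = EWrite p v
  | [:: _] => e = EInv p o
  | [:: _; _] => exists b r, e = EResp p b r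
  | [:: _; _; EResp _ true _] => e = EDecide p (Some v)
  | [:: _; _; EResp _ false _] => e = ERead p cq
  | [:: _; _; EResp _ false _; ERead _ x] => e = EDecide p x
  | _ => False
  end.

Definition follows_code (R : run) (i j : Pid) (vi vj : V) (opi opj : Op) :=
  forall t e, R t = Some e ->
    (proc e = i /\ code_step i vi opi (local R i t) (reg R j t) e) \/
    (proc e = j /\ code_step j vj opj (local R j t) (reg R i t) e).

Definition resp_of (R : run) (t t' : nat) (p : Pid) (b : bool) (r : Res) :=
  t < t' /\ R t' = Some (EResp p b r) /\
  forall u, t < u < t' -> forall b' r', R u <> Some (EResp p b' r').

Definition complete (R : run) (t : nat) :=
  exists p o t' b r, R t = Some (EInv p o) /\ resp_of R t t' p b r.

Definition acked_ops (L : seq (nat * Op * bool)) : seq Op :=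
  [seq x.1.2 | x <- L & x.2].

(* O, initialized with state S, is a validated totally-ordered object in run R:
   there is a total order (the list L, entries = (invocation time, op, ACK?))
   on the complete operations such that (1) it extends real-time order, and
   (2) each ACKed op is valid w.r.t. S followed by the ACKed ops preceding it
   and returns execute(...) on it; each NACKed op is not valid there. *)
Definition validated_total (valid : seq Op -> Op -> Pid -> bool)
  (execute : seq Op -> Op -> Pid -> Res) (S : seq Op) (R : run) : Prop :=
  exists L : seq (nat * Op * bool),
    [/\ uniq [seq x.1.1 | x <- L],
        (forall t, t \in [seq x.1.1 | x <- L] <-> complete R t),
        (forall pre x post y, L = pre ++ x :: post -> y \in post ->
           forall t' p b r, resp_of R y.1.1 t' p b r -> ~ (t' < x.1.1)) &
        (forall pre x post, L = pre ++ x :: post ->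
           exists p t' r, R x.1.1 = Some (EInv p x.1.2) /\
             resp_of R x.1.1 t' p x.2 r /\
             (if x.2 then valid (S ++ acked_ops pre) x.1.2 p
                          /\ r = execute (S ++ acked_ops pre) x.1.2 p
              else valid (S ++ acked_ops pre) x.1.2 p = false))].

Definition decided_before (R : run) (p : Pid) (t : nat) :=
  exists u x, u < t /\ R u = Some (EDecide p x).

(* p is correct (does not crash): as long as it has not terminated, it
   eventually takes another step. *)
Definition correct (R : run) (p : Pid) :=
  forall t, ~ decided_before R p t ->
    exists t' e, t <= t' /\ R t' = Some e /\ proc e = p.

End Model.

Arguments EWrite {Pid Op V Res}.
Arguments EInv {Pid Op V Res}.
Arguments EResp {Pid Op V Res}.
Arguments ERead {Pid Op V Res}.
Arguments EDecide {Pid Op V Res}.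

(* Main.v *)
Require Import Defs.
From mathcomp Require Import all_boot.
Set Implicit Arguments. Unset Strict Implicit. Unset Printing Implicit Defensive.

Section Basic.
Variables (Pid Op : eqType) (V Res : Type) (R : run Pid Op V Res).

Lemma events_before_S t : events_before R t.+1 =
  events_before R t ++ (if R t is Some e then [:: e] else [::]).
Proof. by rewrite /events_before -addn1 iotaD pmap_cat /= add0n; case: (R t). Qed.

Lemma local_S p t : local R p t.+1 = local R p t ++
  (if R t is Some e then (if proc e == p then [:: e] else [::]) else [::]).
Proof.
rewrite /local events_before_S filter_cat; by case: (R t) => //= e; case: (proc e == p).
Qed.

Lemma local_split p t h1 e h2 : local R p t = h1 ++ e :: h2 ->
  exists u, u < t /\ R u = Some e /\ proc e = p /\ local R p u = h1.
Proof.
elim: t h2 => [|t IH] h2; first by rewrite /local /events_before /=; case: h1.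
rewrite local_S; case Rt: (R t) => [e'|]; last first.
  by rewrite cats0 => H; have [u [Hu Hr]] := IH h2 H; exists u; split => //; apply: leqW.
case: eqP => He'; last first.
  by rewrite cats0 => H; have [u [Hu Hr]] := IH h2 H; exists u; split => //; apply: leqW.
case/lastP: h2 => [|h2 z].
  by rewrite !cats1 => /rcons_inj [<- <-]; exists t.
rewrite -rcons_cons -rcons_cat cats1 => /rcons_inj [H _]; have [u [Hu Hr]] := IH h2 H.
by exists u; split => //; apply: leqW.
Qed.

Lemma size_local_mono p t d : size (local R p t) <= size (local R p (t + d)).
Proof.
elim: d => [|d IH]; first by rewrite addn0.
by rewrite addnS local_S size_cat; apply: leq_trans IH (leq_addr _ _).
Qed.

Lemma size_local_lt p t1 t2 e : R t1 = Some e -> proc e = p -> t1 < t2 ->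
  size (local R p t1) < size (local R p t2).
Proof.
move=> Ht1 Hp lt; have := size_local_mono p t1.+1 (t2 - t1.+1).
by rewrite subnKC // local_S Ht1 Hp eqxx size_cat /= addn1.
Qed.

Lemma reg_S q t : reg R q t.+1 =
  (if R t is Some (EWrite p v) then (if p == q then Some v else reg R q t) else reg R q t).
Proof. by rewrite /reg events_before_S foldl_cat; case: (R t) => [[]|]. Qed.

Lemma reg_written q vq tw t : (forall u w, R u = Some (EWrite q w) -> w = vq) ->
  R tw = Some (EWrite q vq) -> tw < t -> reg R q t = Some vq.
Proof.
move=> Hw Htw; elim: t => [|t IH] //.
rewrite ltnS leq_eqVlt => /orP [/eqP <-|/IH Hr]; first by rewrite reg_S Htw eqxx.
rewrite reg_S; case Rt: (R t) => [[p' w|?|?|?|?]|] //=; try exact: Hr.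
case: eqP => [Ep|_]; last exact: Hr.
by move: Rt; rewrite Ep => /Hw ->.
Qed.
End Basic.

Section CS.
Variables (Pid Op : eqType) (V Res : Type).
Implicit Types (p : Pid) (v : V) (o : Op) (h : seq (event Pid Op V Res)).

Lemma cs_size p v o h cq e : code_step p v o h cq e -> size h <= 4.
Proof.
by move: h => [|a [|c [|[? ?|? ?|q' [] r|? ?|? ?] [|[? ?|? ?|? ? ?|y z|? ?] [|f h]]]]].
Qed.

Ltac cs_solve := let H := fresh "H" in intros H;
  repeat match goal with H : exists _, _ |- _ => destruct H end;
  try discriminate; try (injection H; intros; subst);
  repeat split; try (left; do 4 eexists; split; reflexivity);
  try (right; do 5 eexists; reflexivity); try (do 4 eexists; reflexivity);
  try (do 2 eexists; reflexivity); try (eexists; reflexivity).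

Lemma cs_write p v o h cq p' v' : code_step p v o h cq (EWrite p' v') ->
  h = [::] /\ p' = p /\ v' = v.
Proof.
by move: h => [|a [|c [|[? ?|? ?|q' [] r|? ?|? ?] [|[? ?|? ?|? ? ?|y z|? ?] [|f h]]]]] //=; cs_solve.
Qed.

Lemma cs_inv p v o h cq p' o' : code_step p v o h cq (EInv p' o') ->
  (exists a, h = [:: a]) /\ p' = p /\ o' = o.
Proof.
by move: h => [|a [|c [|[? ?|? ?|q' [] r|? ?|? ?] [|[? ?|? ?|? ? ?|y z|? ?] [|f h]]]]] //=; cs_solve.
Qed.

Lemma cs_resp p v o h cq p' b r : code_step p v o h cq (EResp p' b r) ->
  (exists a c, h = [:: a; c]) /\ p' = p.
Proof.
by move: h => [|a [|c [|[? ?|? ?|q' [] r'|? ?|? ?] [|[? ?|? ?|? ? ?|y z|? ?] [|f h]]]]] //=; cs_solve.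
Qed.

Lemma cs_dec p v o h cq p' x : code_step p v o h cq (EDecide p' x) ->
  p' = p /\ ((exists a c q' r, h = [:: a; c; EResp q' true r] /\ x = Some v) \/
   (exists a c q' r y, h = [:: a; c; EResp q' false r; ERead y x])).
Proof.
by move: h => [|a [|c [|[? ?|? ?|q' [] r|? ?|? ?] [|[? ?|? ?|? ? ?|y z|? ?] [|f h]]]]] //=; cs_solve.
Qed.
End CS.

Definition stepok (Pid Op : eqType) (V Res : Type) (R : run Pid Op V Res) p q vp opp :=
  forall t e, R t = Some e -> proc e = p ->
    code_step p vp opp (local R p t) (reg R q t) e.

Section Proc.
Variables (Pid Op : eqType) (V Res : Type) (R : run Pid Op V Res) (p q : Pid) (vp : V) (opp : Op).
Hypothesis Hs : stepok R p q vp opp.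

Lemma local_bound t : size (local R p t) <= 5.
Proof.
elim: t => [|t IH] //; rewrite local_S.
case Rt: (R t) => [e|]; last by rewrite cats0.
case: eqP => He; last by rewrite cats0.
by rewrite size_cat addn1; exact: cs_size (Hs Rt He).
Qed.

Lemma write_info u w : R u = Some (EWrite p w) -> w = vp.
Proof. by move=> Hu; case: (cs_write (Hs Hu erefl)) => _ [_ ->]. Qed.

Lemma inv_info u o : R u = Some (EInv p o) ->
  o = opp /\ size (local R p u) = 1 /\ exists tw, tw < u /\ R tw = Some (EWrite p vp).
Proof.
move=> Hu; have Hc := Hs Hu erefl; have [[a Ea] [_ Eo]] := cs_inv Hc; subst o.
split=> //; rewrite Ea; split=> //.
have [tw [Htw [Rtw [Pa Ltw]]]] := local_split (Ea : _ = [::] ++ _ :: [::]).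
exists tw; split=> //; rewrite Rtw; have := Hs Rtw Pa; rewrite Ltw /=.
by move=> ->.
Qed.

Lemma inv_unique t1 t2 o1 o2 : R t1 = Some (EInv p o1) -> R t2 = Some (EInv p o2) -> t1 = t2.
Proof.
move=> H1 H2; have [_ [S1 _]] := inv_info H1; have [_ [S2 _]] := inv_info H2.
case: (ltngtP t1 t2) => // lt.
  by have := size_local_lt H1 erefl lt; rewrite S1 S2.
by have := size_local_lt H2 erefl lt; rewrite S1 S2.
Qed.

Lemma resp_size u b r : R u = Some (EResp p b r) -> size (local R p u) = 2.
Proof. by move=> Hu; case: (cs_resp (Hs Hu erefl)) => [[a [c ->]]]. Qed.

Lemma resp_unique t1 t2 b1 b2 r1 r2 : R t1 = Some (EResp p b1 r1) ->
  R t2 = Some (EResp p b2 r2) -> t1 = t2.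
Proof.
move=> H1 H2; have S1 := resp_size H1; have S2 := resp_size H2.
case: (ltngtP t1 t2) => // lt.
  by have := size_local_lt H1 erefl lt; rewrite S1 S2.
by have := size_local_lt H2 erefl lt; rewrite S1 S2.
Qed.

Lemma resp_info u1 b r : R u1 = Some (EResp p b r) ->
  exists u0, u0 < u1 /\ R u0 = Some (EInv p opp) /\ resp_of R u0 u1 p b r.
Proof.
move=> Hu1; case: (cs_resp (Hs Hu1 erefl)) => [[a [c Ea]] _].
have [u0 [Hu0 [Ru0 [Pc Lu0]]]] := local_split (Ea : _ = [:: a] ++ _ :: [::]).
have := Hs Ru0 Pc; rewrite Lu0 /= => Ec; rewrite Ec in Ru0.
exists u0; split => //; split => //; split => //; split => //.
move=> u /andP [l1 l2] b' r' Ru.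
by have E := resp_unique Ru Hu1; rewrite E ltnn in l2.
Qed.

Lemma decide_shape t x : R t = Some (EDecide p x) ->
  exists u1 b r, u1 < t /\ R u1 = Some (EResp p b r) /\
   ((b = true /\ x = Some vp) \/ (b = false /\ exists u2, u1 < u2 /\ x = reg R q u2)).
Proof.
move=> Ht; case: (cs_dec (Hs Ht erefl)) => _ [[a [c [q' [r [Eh ->]]]]]|[a [c [q' [r [y Eh]]]]]].
  have [u1 [Hu1 [Ru1 [Pq Lu1]]]] := local_split (Eh : _ = [:: a; c] ++ _ :: [::]).
  simpl in Pq; subst q'; exists u1, true, r; split => //; split => //; by left.
have [u2 [Hu2 [Ru2 [Py Lu2]]]] := local_split (Eh : _ = [:: a; c; EResp q' false r] ++ _ :: [::]).
simpl in Py; subst y.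
have := Hs Ru2 erefl; rewrite Lu2 /= => [[Ex]].
have [u1 [Hu1 [Ru1 [Pq Lu1]]]] := local_split (Lu2 : _ = [:: a; c] ++ _ :: [::]).
simpl in Pq; subst q'; exists u1, false, r; split; first exact: ltn_trans Hu1 Hu2.
split => //; right; split => //; by exists u2.
Qed.
End Proc.

Section Main.
Variables (Pid Op : eqType) (V Res : Type) (valid : seq Op -> Op -> Pid -> bool)
  (execute : seq Op -> Op -> Pid -> Res) (S : seq Op) (R : run Pid Op V Res)
  (L : seq (nat * Op * bool)) (p q : Pid) (vp vq : V) (opp opq : Op).
Hypothesis Hsp : stepok R p q vp opp.
Hypothesis Hsq : stepok R q p vq opq.
Hypothesis Hproc : forall t e, R t = Some e -> proc e = p \/ proc e = q.
Hypothesis Vp : valid S opp p = true.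
Hypothesis Vp' : valid (rcons S opq) opp p = false.
Hypothesis HU : uniq [seq x.1.1 | x <- L].
Hypothesis H2 : forall t, t \in [seq x.1.1 | x <- L] <-> complete R t.
Hypothesis H3 : forall pre x post y, L = pre ++ x :: post -> y \in post ->
           forall t' p b r, resp_of R y.1.1 t' p b r -> ~ (t' < x.1.1).
Hypothesis H4 : forall pre x post, L = pre ++ x :: post ->
           exists p t' r, R x.1.1 = Some (EInv p x.1.2) /\
             resp_of R x.1.1 t' p x.2 r /\
             (if x.2 then valid (S ++ acked_ops pre) x.1.2 p
                          /\ r = execute (S ++ acked_ops pre) x.1.2 p
              else valid (S ++ acked_ops pre) x.1.2 p = false).

Lemma entry_of u0 u1 b r : R u0 = Some (EInv p opp) -> resp_of R u0 u1 p b r ->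
  exists pre x post, L = pre ++ x :: post /\ x.1.1 = u0 /\ x.2 = b /\
    valid (S ++ acked_ops pre) opp p = b.
Proof.
move=> Hu0 Hr.
have : u0 \in [seq x.1.1 | x <- L] by apply/H2; exists p, opp, u1, b, r.
case/mapP => x xL Ex.
have [pre [post EL]] : exists pre post, L = pre ++ x :: post.
  by case/splitPr: xL => pre post; exists pre, post.
have [p' [t' [r' [Rx [Hr' Hv]]]]] := H4 EL.
rewrite -Ex Hu0 in Rx; case: Rx => Ep Eo; subst p'.
case: Hr' => [_ [Rt' _]]; case: Hr => [_ [Ru1 _]].
have Et := resp_unique Hsp Rt' Ru1; rewrite Et Ru1 in Rt'; case: Rt' => Eb _.
exists pre, x, post; split => //; split => //; split => //.
rewrite Eb Eo; move: Hv; case: (x.2) => [[-> _]|->] //.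
Qed.

Lemma other_entry x pre1 z post1 pre post : L = pre ++ x :: post ->
  R x.1.1 = Some (EInv p opp) -> L = pre1 ++ z :: post1 -> z.1.1 != x.1.1 ->
  R z.1.1 = Some (EInv q opq).
Proof.
move=> _ Rx EL Ne; have [p' [_ [_ [Rz _]]]] := H4 EL.
case: (Hproc Rz) => /= Ep; subst p'.
  by rewrite (inv_unique Hsp Rz Rx) eqxx in Ne.
by have [Eo _] := inv_info Hsq Rz; rewrite Rz Eo.
Qed.

Lemma pre_shape pre x post : L = pre ++ x :: post -> R x.1.1 = Some (EInv p opp) ->
  pre = [::] \/ exists y, pre = [:: y] /\ R y.1.1 = Some (EInv q opq).
Proof.
move=> EL Rx; case: pre EL => [|y pre] EL; [by left|right].
have U := HU; rewrite EL /= map_cat /= in U; case/andP: U => Hy U.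
have Ny : y.1.1 != x.1.1.
  by apply: contraNneq Hy => ->; rewrite mem_cat inE eqxx orbT.
have Ry := other_entry EL Rx (EL : L = [::] ++ y :: (pre ++ x :: post)) Ny.
case: pre EL Hy U => [|z pre] EL Hy U; first by exists y.
rewrite /= in U; case/andP: U => Hz _.
have Nz : z.1.1 != x.1.1.
  by apply: contraNneq Hz => ->; rewrite mem_cat inE eqxx orbT.
have Rz := other_entry EL Rx (EL : L = [:: y] ++ z :: (pre ++ x :: post)) Nz.
by rewrite (inv_unique Hsq Ry Rz) /= inE eqxx in Hy.
Qed.

Lemma nack_pre u0 u1 r : R u0 = Some (EInv p opp) -> resp_of R u0 u1 p false r ->
  exists y, y.1.1 < u1 /\ R y.1.1 = Some (EInv q opq) /\
    exists pre post, L = pre ++ y :: post /\ y.2 = true.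
Proof.
move=> Hu0 Hr; have [pre [x [post [EL [Ex [Eb Hv]]]]]] := entry_of Hu0 Hr.
rewrite -Ex in Hu0 Hr.
case: (pre_shape EL Hu0) => [Ep|[y [Ep Ry]]]; subst pre.
  by rewrite /= cats0 Vp in Hv.
have Ey : y.2 = true by move: Hv; rewrite /acked_ops /=; case: (y.2) => //; rewrite cats0 Vp.
exists y; split; last by split => //; exists [::], (x :: post).
have := H3 (EL : L = [::] ++ y :: (x :: post)) (mem_head _ _) Hr.
move/negP; rewrite -leqNgt leq_eqVlt => /orP [/eqP E|] //.
case: Hr => [_ [Ru1 _]]; by rewrite E Ru1 in Ry.
Qed.

Lemma nack_read u0 u1 r u2 : R u0 = Some (EInv p opp) -> resp_of R u0 u1 p false r ->
  u1 < u2 -> reg R q u2 = Some vq.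
Proof.
move=> Hu0 Hr Hu2; have [y [Hy [Ry _]]] := nack_pre Hu0 Hr.
have [_ [_ [tw [Htw Rtw]]]] := inv_info Hsq Ry.
apply: (reg_written (fun u w Hu => write_info Hsq Hu) Rtw).
by apply: ltn_trans Htw (ltn_trans Hy Hu2).
Qed.

Lemma ack_pre u0 u1 r : R u0 = Some (EInv p opp) -> resp_of R u0 u1 p true r ->
  (forall pre y post, L = pre ++ y :: post -> R y.1.1 = Some (EInv q opq) -> y.2 = true) ->
  exists x post, L = x :: post /\ x.1.1 = u0.
Proof.
move=> Hu0 Hr Hq; have [pre [x [post [EL [Ex [Eb Hv]]]]]] := entry_of Hu0 Hr.
rewrite -Ex in Hu0.
case: (pre_shape EL Hu0) => [Ep|[y [Ep Ry]]]; subst pre; first by exists x, post.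
have Ey := Hq [::] y (x :: post) EL Ry.
have [p' [_ [_ [Ry' _]]]] := H4 (EL : L = [::] ++ y :: (x :: post)).
rewrite Ry in Ry'; case: Ry' => _ Eo.
by move: Hv; rewrite /acked_ops /= Ey /= -Eo cats1 Vp'.
Qed.

Lemma flag_at pre y post o u1 b r : L = pre ++ y :: post -> R y.1.1 = Some (EInv p o) ->
  R u1 = Some (EResp p b r) -> y.2 = b.
Proof.
move=> EL Ry Ru1; have [p' [t' [r' [Ry' [[_ [Rt' _]] _]]]]] := H4 EL.
rewrite Ry in Ry'; case: Ry' => Ep _; subst p'.
have Et := resp_unique Hsp Rt' Ru1; rewrite Et Ru1 in Rt'; by case: Rt'.
Qed.
End Main.

From Stdlib Require Import Classical.

Lemma termination (Pid Op : eqType) (V Res : Type) (R : run Pid Op V Res) p q vp opp :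
  stepok R p q vp opp -> correct R p -> exists t x, R t = Some (EDecide p x).
Proof.
move=> Hs Hc.
case: (classic (exists t, decided_before R p t)) => [[t [u [x [_ Hu]]]]|Hnd].
  by exists u, x.
have Hn : forall n, exists T, n <= size (local R p T).
  elim=> [|n [T HT]]; first by exists 0.
  have [t' [e [HT' [Rt' Pe]]]] : exists t' e, T <= t' /\ R t' = Some e /\ proc e = p.
    by apply: Hc => H; apply: Hnd; exists T.
  exists t'.+1; rewrite local_S Rt' Pe eqxx size_cat addn1 ltnS.
  apply: leq_trans HT _; have := size_local_mono R p T (t' - T); by rewrite subnKC.
have [T HT] := Hn 6; have := local_bound Hs T.
by move=> H; have := leq_trans HT H.
Qed.

Theorem mainTheorem7 (Pid Op : eqType) (V Res : Type)
  (valid : seq Op -> Op -> Pid -> bool) (execute : seq Op -> Op -> Pid -> Res)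
  (S : seq Op) (i j : Pid) (opi opj : Op) :
  i != j -> opi \notin S -> opj \notin S ->
  valid S opi i = true -> valid S opj j = true ->
  valid (rcons S opj) opi i = false -> valid (rcons S opi) opj j = false ->
  forall (vi vj : V) (R : run Pid Op V Res),
    follows_code R i j vi vj opi opj ->
    validated_total valid execute S R ->
    (correct R i \/ correct R j) ->
    [/\ (forall p, (p = i \/ p = j) -> correct R p ->
           exists t x, R t = Some (EDecide p x)),
        (forall t1 t2 x y, R t1 = Some (EDecide i x) ->
           R t2 = Some (EDecide j y) -> x = y) &
        (forall t p x, R t = Some (EDecide p x) -> x = Some vi \/ x = Some vj)].
Proof.
move=> Hij _ _ Vi Vj Vi' Vj' vi vj R Hfc [L [HU H2 H3 H4]] _.
have Hsi : stepok R i j vi opi.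
  move=> t e Rt Pe; case: (Hfc t e Rt) => [[]|[Pj]] //.
  by rewrite Pe in Pj; rewrite Pj eqxx in Hij.
have Hsj : stepok R j i vj opj.
  move=> t e Rt Pe; case: (Hfc t e Rt) => [[Pi]|[]] //.
  by rewrite Pe in Pi; rewrite Pi eqxx in Hij.
have Hpi : forall t e, R t = Some e -> proc e = i \/ proc e = j.
  by move=> t e Rt; case: (Hfc t e Rt) => [[]|[]]; auto.
have Hpj : forall t e, R t = Some e -> proc e = j \/ proc e = i.
  by move=> t e Rt; case: (Hpi t e Rt); auto.
split.
- move=> p [->|->] Hc; [exact: termination Hsi Hc | exact: termination Hsj Hc].
- move=> t1 t2 x y Rt1 Rt2.
  have [u1 [b1 [r1 [_ [Ru1 Hx]]]]] := decide_shape Hsi Rt1.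
  have [w1 [b2 [r2 [_ [Rw1 Hy]]]]] := decide_shape Hsj Rt2.
  have [u0 [_ [Ru0 Hr1]]] := resp_info Hsi Ru1.
  have [w0 [_ [Rw0 Hr2]]] := resp_info Hsj Rw1.
  case: Hx => [[Eb1 Ex]|[Eb1 [u2 [Hu2 Ex]]]]; case: Hy => [[Eb2 Ey]|[Eb2 [w2 [Hw2 Ey]]]];
    subst b1 b2.
  + have Qi : forall pre y post, L = pre ++ y :: post -> R y.1.1 = Some (EInv j opj) -> y.2 = true.
      by move=> pre y0 post EL Ry; exact: (flag_at Hsj H4 EL Ry Rw1).
    have Qj : forall pre y post, L = pre ++ y :: post -> R y.1.1 = Some (EInv i opi) -> y.2 = true.
      by move=> pre y0 post EL Ry; exact: (flag_at Hsi H4 EL Ry Ru1).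
    have [xa [pa [ELa Ea]]] := ack_pre Hsi Hsj Hpi Vi' HU H2 H4 Ru0 Hr1 Qi.
    have [xb [pb [ELb Eb]]] := ack_pre Hsj Hsi Hpj Vj' HU H2 H4 Rw0 Hr2 Qj.
    rewrite ELa in ELb; case: ELb => Exab _; subst xb.
    by move: Ru0; rewrite -Ea Eb Rw0 => [[Eij _]]; rewrite Eij eqxx in Hij.
  + by rewrite Ex Ey (nack_read Hsj Hsi Hpj Vj HU H2 H3 H4 Rw0 Hr2 Hw2).
  + by rewrite Ey Ex (nack_read Hsi Hsj Hpi Vi HU H2 H3 H4 Ru0 Hr1 Hu2).
  + have [y0 [_ [Ry [pre [post [EL Ey0]]]]]] := nack_pre Hsi Hsj Hpi Vi HU H2 H3 H4 Ru0 Hr1.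
    by rewrite (flag_at Hsj H4 EL Ry Rw1) in Ey0.
- move=> t p x Rt; case: (Hpi t _ Rt) => /= Ep; subst p.
  + have [u1 [b1 [r1 [_ [Ru1 Hx]]]]] := decide_shape Hsi Rt.
    have [u0 [_ [Ru0 Hr1]]] := resp_info Hsi Ru1.
    case: Hx => [[_ ->]|[Eb [u2 [Hu2 ->]]]]; first by left.
    subst b1; right; exact: (nack_read Hsi Hsj Hpi Vi HU H2 H3 H4 Ru0 Hr1 Hu2).
  + have [u1 [b1 [r1 [_ [Ru1 Hx]]]]] := decide_shape Hsj Rt.
    have [u0 [_ [Ru0 Hr1]]] := resp_info Hsj Ru1.
    case: Hx => [[_ ->]|[Eb [u2 [Hu2 ->]]]]; first by right.
    subst b1; left; exact: (nack_read Hsj Hsi Hpj Vj HU H2 H3 H4 Ru0 Hr1 Hu2).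
Qed.
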